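(* Let $k$ be a positive integer, let $N$ be an integer with $\gcd(N,k!)=1$, and let $A=\{a_1,a_2,\dots,a_n\}\subseteq\mathbb{Z}_N$ be a $k$-fold Sidon set. Let $k_+,k_-$ be integers with $0\leq k_-\leq k_+\leq k$ and $k_++k_-\geq 1$. In the group $G \triangleq \mathbb{Z}_{2(k_++k_-)+1} \times \mathbb{Z}_N$ let \[S\triangleq \{ (1,x) : x \in A\}.\] Then $G \ge [-k_-,k_+]^* \diamond_2 S$.
   Context: $[a,b]=\{a,a+1,\dots,b\}$ and $[a,b]^*=[a,b]\setminus\{0\}$. $k$-fold Sidon sets: let $k\ge1$ and $\gcd(N,k!)=1$. For integers $c_1,c_2,c_3,c_4\in[-k,k]$ with $c_1+c_2+c_3+c_4=0$, let $\mathcal{S}$ be the collection of sets $T\subseteq\{1,2,3,4\}$ such that $\sum_{i\in T}c_i=0$ and $c_i\ne0$ for all $i\in T$ (so $\varnothing\in\mathcal{S}$). A solution $(x_1,x_2,x_3,x_4)\in\mathbb{Z}_N^4$ of $c_1x_1+c_2x_2+c_3x_3+c_4x_4\equiv0\pmod N$ is trivial if there is a partition of $\{i: c_i\ne0\}$ into two sets $T_1,T_2\in\mathcal{S}$ such that $x_i=x_j$ for all $i,j\in T_1$ and for all $i,j\in T_2$. A set $A\subseteq\mathbb{Z}_N$ is a $k$-fold Sidon set if for every such $c_1,\dots,c_4$, this equation has only trivial solutions with $x_1,\dots,x_4\in A$. For a finite Abelian group $G$, a finite set $M\subseteq\mathbb{Z}\setminus\{0\}$ and $S=\{s_1,\dots,s_n\}\subseteq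 G$, we write $G\ge M\diamond_t S$ if the elements $\sum_i e_is_i$, over all $\mathbf{e}\in(M\cup\{0\})^n$ with $1\le\mathrm{wt}(\mathbf{e})\le t$, are all distinct and non-zero in $G$ ($\mathrm{wt}$ = Hamming weight). *)

(* Defs.v *)
From HB Require Import structures.
From mathcomp Require Import all_boot all_order all_algebra.
Set Implicit Arguments. Unset Strict Implicit. Unset Printing Implicit Defensive.
Import Order.TTheory GRing.Theory Num.Theory.
Local Open Scope ring_scope.

(* Z_N is represented as 'I_N'.+1 (N = N'.+1 >= 1) with its Zp additive group. *)

Definition in_calS (c : {ffun 'I_4 -> int}) (T : {set 'I_4}) : bool :=
  (\sum_(i in T) c i == 0) && [forall i in T, c i != 0].

Definition trivial_solution (G : zmodType) (c : {ffun 'I_4 -> int})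
    (x : {ffun 'I_4 -> G}) : Prop :=
  exists T1 T2 : {set 'I_4},
    [/\ in_calS c T1, in_calS c T2, [disjoint T1 & T2] &
        T1 :|: T2 = [set i | c i != 0]] /\
    (forall i j, i \in T1 -> j \in T1 -> x i = x j) /\
    (forall i j, i \in T2 -> j \in T2 -> x i = x j).

Definition kfold_Sidon (N' k : nat) (A : {set 'I_N'.+1}) : Prop :=
  forall c : {ffun 'I_4 -> int},
    (forall i, - (k%:Z) <= c i <= k%:Z) -> \sum_i c i = 0 ->
    forall x : {ffun 'I_4 -> 'I_N'.+1},
      (forall i, x i \in A) ->
      \sum_i (x i *~ c i) = 0 ->
      trivial_solution c x.

Definition wt n (e : {ffun 'I_n -> int}) : nat := #|[set i | e i != 0]|.

(* G >= M <>_t S, for S = {s_1,...,s_n} given by an injective s : 'I_n -> G,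
   M a set of nonzero integers given as a predicate. *)
Definition diamond (G : zmodType) (M : pred int) (t n : nat) (s : 'I_n -> G) : Prop :=
  let adm (e : {ffun 'I_n -> int}) :=
    (forall i, e i = 0 \/ M (e i)) /\ (1 <= wt e <= t)%N in
  forall e e' : {ffun 'I_n -> int}, adm e -> adm e' ->
    \sum_i (s i *~ e i) != 0 /\
    (\sum_i (s i *~ e i) = \sum_i (s i *~ e' i) -> e = e').

Definition int_range_star (a b : int) : pred int := fun e => (a <= e <= b) && (e != 0).

(* Main.v *)
Require Import Defs.
From HB Require Import structures.
From mathcomp Require Import all_boot all_order all_algebra zify.
Import Order.TTheory GRing.Theory Num.Theory.
Local Open Scope ring_scope.
From mathcomp Require Import zify.

Lemma zp_nat0 m (n : nat) : (n < m.+1)%N -> (inZp 1 : 'I_m.+1) *+ n = 0 -> n = 0%N.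
Proof.
move=> lt /(congr1 val) /=. rewrite Zp_mulrn /= modnMml mul1n modn_small //.
Qed.

Lemma zp_mulz0 m (w : int) : (`|w| <= m)%N -> (inZp 1 : 'I_m.+1) *~ w = 0 -> w = 0.
Proof.
case: w => n /= le H.
  by rewrite (@zp_nat0 m n) //; lia.
have := @zp_nat0 m n.+1; rewrite NegzE in H.
move: H; rewrite mulrNz => /eqP; rewrite oppr_eq0 => /eqP H.
move=> /(_ _ H) => //; lia.
Qed.
Lemma triv_count (G : zmodType) c (x : {ffun 'I_4 -> G}) :
  trivial_solution c x -> forall v, \sum_i c i * (x i == v)%:Z = 0.
Proof.
move=> [T1 [T2 [[h1 h2 hd hU] [e1 e2]]]] v.
have part T (hT: in_calS c T) (eT: forall i j, i\in T -> j \in T -> x i = x j):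
   \sum_(i in T) c i * (x i == v)%:Z = 0.
  case: (pickP (mem T)) => [i0 Hi0 | none].
    rewrite (eq_bigr (fun i => c i * (x i0 == v)%:Z)) => [| i Hi]; last by rewrite (eT i i0).
    by rewrite -big_distrl /=; move/andP: hT => [/eqP -> _]; rewrite mul0r.
  by rewrite big_pred0.
rewrite (bigID (fun i => i \in T1 :|: T2)) /=.
rewrite [X in _ + X]big1 ?addr0; last first.
  by move=> i; rewrite hU inE negbK => /eqP ->; rewrite mul0r.
rewrite (eq_bigl [predU T1 & T2]); last by move=> i; rewrite !inE.
by rewrite bigU //= (part T1) // (part T2) // addr0.
Qed.
Lemma repr2 n (e : {ffun 'I_n -> int}) (p0 : 'I_n) : (wt e <= 2)%N ->
 exists p1 p2 : 'I_n, exists u1 u2 : int,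
  (forall l, e l = u1 * (l == p1)%:Z + u2 * (l == p2)%:Z) /\ u1 = e p1 /\ (u2 = 0 \/ u2 = e p2).
Proof.
rewrite /wt; set S := [set i | e i != 0].
have eS l : l \notin S -> e l = 0 by rewrite inE negbK => /eqP.
rewrite leq_eqVlt ltnS leq_eqVlt ltnS leqn0.
case/or3P.
- case/cards2P => p [q [pq hS]].
  exists p, q, (e p), (e q); split; last by split; [|right].
  move=> l; have [->|lp] := eqVneq l p.
    by rewrite (negbTE pq) mulr1 mulr0 addr0.
  have [->|lq] := eqVneq l q; first by rewrite mulr1 mulr0 add0r.
  by rewrite eS ?hS ?inE ?(negbTE lp) ?(negbTE lq) // !mulr0 addr0.
- case/cards1P => p hS.
  exists p, p, (e p), 0; split; last by split; [|left].
  move=> l; have [->|lp] := eqVneq l p; first by rewrite mulr1 mul0r addr0.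
  by rewrite eS ?hS ?inE ?(negbTE lp) // mulr0 mul0r addr0.
- move/eqP/cards0_eq => hS.
  exists p0, p0, 0, 0; split; last by rewrite eS ?hS ?inE //; split; [|left].
  by move=> l; rewrite eS ?hS ?inE // !mul0r addr0.
Qed.

Lemma sum2 (G : zmodType) n (s : 'I_n -> G) p1 p2 u1 u2 :
  \sum_i s i *~ (u1 * (i == p1)%:Z + u2 * (i == p2)%:Z) = s p1 *~ u1 + s p2 *~ u2.
Proof.
have one p u : \sum_i s i *~ (u * (i == p)%:Z) = s p *~ u.
  rewrite (bigD1 p) //= eqxx mulr1 big1 ?addr0 // => i /negbTE ->.
  by rewrite mulr0 mulr0z.
by rewrite -!one -big_split /=; apply: eq_bigr => i _; rewrite mulrzDr.
Qed.

Theorem theorem10 (k N' n : nat) (a : 'I_n -> 'I_N'.+1) (kp km : nat) :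
  (0 < k)%N -> coprime N'.+1 k`! -> injective a ->
  kfold_Sidon k [set a i | i in 'I_n] ->
  (km <= kp)%N -> (kp <= k)%N -> (1 <= kp + km)%N ->
  diamond (G := ('I_(2 * (kp + km)).+1 * 'I_N'.+1)%type)
    (int_range_star (- (km%:Z)) (kp%:Z)) 2
    (fun i => (inZp 1, a i)).
Proof.
move=> k0 cop inja sid kmp kpk pos.
set s := (fun i => (inZp 1, a i)) : 'I_n -> ('I_(2 * (kp + km)).+1 * 'I_N'.+1)%type.
have core (f f' : {ffun 'I_n -> int}) :
    (forall i, - (km%:Z) <= f i <= kp%:Z) -> (forall i, - (km%:Z) <= f' i <= kp%:Z) ->
    (wt f <= 2)%N -> (wt f' <= 2)%N ->
    \sum_i s i *~ f i = \sum_i s i *~ f' i -> f = f'.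
  move=> bf bf' wf wf' H; apply/ffunP => l.
  have [p1 [p2 [u1 [u2 [E1 [U1 U2]]]]]] := @repr2 _ f l wf.
  have [q1 [q2 [v1 [v2 [E2 [V1 V2]]]]]] := @repr2 _ f' l wf'.
  have bu1 : - (km%:Z) <= u1 <= kp%:Z by rewrite U1.
  have bu2 : - (km%:Z) <= u2 <= kp%:Z by case: U2 => ->; [lia|].
  have bv1 : - (km%:Z) <= v1 <= kp%:Z by rewrite V1.
  have bv2 : - (km%:Z) <= v2 <= kp%:Z by case: V2 => ->; [lia|].
  move: H.
  rewrite (eq_bigr (fun i => s i *~ (u1 * (i == p1)%:Z + u2 * (i == p2)%:Z))); last by move=> i _; rewrite E1.
  rewrite [RHS](eq_bigr (fun i => s i *~ (v1 * (i == q1)%:Z + v2 * (i == q2)%:Z))); last by move=> i _; rewrite E2.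
  rewrite !sum2 => H.
  have H1 := congr1 fst H; have H2 := congr1 snd H.
  rewrite !raddfD !raddfMz /= in H1.
  rewrite !raddfD !raddfMz /= in H2.
  have W : u1 + u2 - (v1 + v2) = 0.
    apply: (@zp_mulz0 (2 * (kp + km))); first lia.
    by rewrite mulrzBr !mulrzDr H1 subrr.
  pose c : {ffun 'I_4 -> int} := [ffun i : 'I_4 => nth 0 [:: u1; u2; -v1; -v2] i].
  pose x : {ffun 'I_4 -> 'I_N'.+1} := [ffun i : 'I_4 => nth (a l) [:: a p1; a p2; a q1; a q2] i].
  have T : trivial_solution c x.
    apply: sid.
    - by move=> [[|[|[|[|i]]]] Hi] //=; rewrite ffunE /=; lia.
    - by rewrite !big_ord_recr big_ord0 /= !ffunE /=; lia.
    - by move=> [[|[|[|[|i]]]] Hi] //=; rewrite ffunE /= imset_f.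
    - rewrite !big_ord_recr big_ord0 /= !ffunE /= !mulrNz.
      by rewrite add0r -addrA -opprD H2 subrr.
  have := @triv_count _ _ _ T (a l).
  rewrite !big_ord_recr big_ord0 /= !ffunE /= !(inj_eq inja) E1 E2.
  rewrite !(eq_sym l).
  by case: (p1 == l); case: (p2 == l); case: (q1 == l); case: (q2 == l); rewrite /=; lia.
have bnd (f : {ffun 'I_n -> int}) :
    (forall i, f i = 0 \/ int_range_star (- (km%:Z)) (kp%:Z) (f i)) ->
    forall i, - (km%:Z) <= f i <= kp%:Z.
  move=> hf i; case: (hf i) => [->|/andP[] //]; lia.
move=> e e' [adm1 /andP[w1 w1']] [adm2 /andP[w2 w2']]; split.
  apply/eqP => H.
  have wt0 : wt ([ffun => 0] : {ffun 'I_n -> int}) = 0%N.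
    rewrite /wt; apply/eqP; rewrite cards_eq0; apply/eqP/setP => i.
    by rewrite !inE ffunE eqxx.
  have e0 : e = [ffun => 0].
    apply: core => //; first by apply: bnd.
    - by move=> i; rewrite ffunE; lia.
    - by rewrite wt0.
    - by rewrite H big1 // => i _; rewrite ffunE mulr0z.
  by move: w1; rewrite e0 wt0.
by apply: core; [exact: (bnd _ adm1)|exact: (bnd _ adm2)|..].
Qed.
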